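(* Let $N_1$ and $N_2$ be phylogenetic networks on the same set $S$ of taxa. If $m(N_1,N_2)=0$ (equivalently, $\Upsilon(N_1)=\Upsilon(N_2)$), then $N_1$ and $N_2$ are indistinguishable, i.e. their reduced versions satisfy $R(N_1)\cong R(N_2)$.
   Context: A phylogenetic network on a finite set $S$ of taxa is a finite rooted directed acyclic graph (exactly one node without parents) whose leaves (nodes without children) are bijectively labeled by the elements of $S$. A tree node is a node with at most one parent; a hybrid node is a node with more than one parent. The height $h(v)$ of a node is the largest length of a directed path from $v$ to a leaf. The nested label $\ell(v)$ of a node $v$ is defined by induction on height: if $v$ is a leaf labeled $i$, $\ell(v)=\{i\}$; otherwise, if $v_1,\dots,v_k$ are the children of $v$, $\ell(v)$ is the multiset $\{\ell(v_1),\dots,\ell(v_k)\}$. $\Upsilon(N)$ is the multiset of nested labels of all nodes of $N$ (each nested label counted with multiplicity the number of nodes having it), and $m(N_1,N_2)=\frac12|\Upsilon(N_1)\bigtriangleup\Upsilon(N_2)|$, where for multisets $M_1,M_2$ the symmetric difference gives each element multiplicity $|M_1(x)-M_2(x)|$ and $|M|$ is the sum of multiplicities. The cluster of a node $u$ is the set of labels of leaves descending from $u$; two nodes are convergent when they have the same cluster. For a node $u$, $N(u)$ denotes the subgraph induced on the descendants of $u$; a clade of $N$ is a subgraph $N(u)$ all of whose nodes are tree nodes of $N$. The reduced version $R(N)$ is obtained as follows. If $N$ has no pair of distinct convergent nodes, $R(N)=N$. Otherwise: (0) for every maximal clade $T$ of $N$ with root $r_T$, insert a new node $h_T$ between $r_T$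 and its only parent, label $h_T$ by a symbol for $T$, and remove $r_T$ and its descendants, so $h_T$ becomes a ''symbolic leaf''; call the result $N^*$ (its leaves are symbolic leaves and hybrid leaves of $N$). (1) Remove from $N^*$ all internal nodes that are convergent in $N$ with some other node, and all internal nodes of $N^*$ that are descendants of some removed node. (2) For every remaining node $x$ that was a parent of a node $v$ removed in (1), add an arc from $x$ to every (hybrid or symbolic) leaf that was a descendant of $v$ in $N^*$, if such an arc does not already exist. (3) For every symbolic leaf $h_T$, remove its label and append the clade $T$ to it via an arc $(h_T,r_T)$. (4) Replace every node with exactly one parent and one child by an arc from its parent to its child. Isomorphism $\cong$ of such leaf-labeled DAGs means a digraph isomorphism mapping each leaf to the leaf with the same label. Two networks are indistinguishable when $R(N_1)\cong R(N_2)$. *)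

(* Defs.v *)
From mathcomp Require Import all_boot.
From mathcomp Require Import boolp.
From Stdlib Require List Permutation.

Set Implicit Arguments.
Unset Strict Implicit.
Unset Printing Implicit Defensive.

(* Nested labels: a leaf {i}, or a (finite) multiset of nested labels.        *)
(* Multisets are represented by lists; equality of nested labels is the       *)
(* structural multiset equality [nl_eqv] (lists equal up to permutation,      *)
(* elementwise recursively).                                                  *)
Inductive nlabel (S : Type) : Type :=
| NLeaf of S
| NNode of seq (nlabel S).
Arguments NLeaf {S}.
Arguments NNode {S}.

Inductive nl_eqv {S : Type} : nlabel S -> nlabel S -> Prop :=
| nle_leaf s : nl_eqv (NLeaf s) (NLeaf s)
| nle_node l1 l2 l3 :
    Permutation.Permutation l1 l2 -> List.Forall2 nl_eqv l2 l3 ->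
    nl_eqv (NNode l1) (NNode l3).

Section Network.
Variables (S V : finType) (E : rel V) (lf : S -> V).

Definition parents (v : V) : {set V} := [set u | E u v].
Definition children (v : V) : {set V} := [set w | E v w].
Definition is_leaf (v : V) : bool := [forall w, ~~ E v w].
Definition is_tree_node (v : V) : bool := #|parents v| <= 1.
Definition is_hybrid (v : V) : bool := 1 < #|parents v|.

Definition is_network : Prop :=
  [/\ (forall u v, E u v -> ~~ connect E v u),
      (exists r, forall u, (parents u == set0) = (u == r)),
      injective lf &
      (forall v, is_leaf v <-> exists s, lf s = v)].

Definition labN (v : V) : option S := [pick s | lf s == v].

(* nested label, defined by recursion on height; #|V| exceeds every height *)
Fixpoint nlab_fuel (k : nat) (v : V) : nlabel S :=
  match k with
  | 0 => NNode [::]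
  | k'.+1 =>
      if is_leaf v then
        (if labN v is Some s then NLeaf s else NNode [::])
      else NNode (map (nlab_fuel k') (enum (children v)))
  end.
Definition nlab (v : V) : nlabel S := nlab_fuel #|V| v.

Definition Ups_mult (x : nlabel S) : nat :=
  #|[set v : V | `[< nl_eqv (nlab v) x >]]|.

Definition cluster (u : V) : {set S} := [set s | connect E u (lf s)].
Definition has_conv : bool :=
  [exists u, exists w, (u != w) && (cluster u == cluster w)].
Definition conv_other (u : V) : bool :=
  [exists w, (w != u) && (cluster w == cluster u)].

(* u lies in a clade  iff  N(u) consists of tree nodes only *)
Definition inC (u : V) : bool := [forall v, connect E u v ==> is_tree_node v].
Definition clade_root (r : V) : bool := inC r && [forall p, E p r ==> ~~ inC p].
(* internal nodes of N^* (nodes of N outside clades that are not leaves) *)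
Definition internalS (u : V) : bool := ~~ inC u && ~~ is_leaf u.
Definition hleaf (u : V) : bool := is_leaf u && is_hybrid u.
Definition removed (u : V) : bool :=
  internalS u && [exists d, [&& internalS d, conv_other d & connect E d u]].
Definition keptS (u : V) : bool := internalS u && ~~ removed u.
Definition newarc (x t : V) : bool :=
  [exists v, [&& removed v, E x v & connect E v t]].

(* Node type of the construction: inl v = original node v,
   inr r = the new node h_T of the maximal clade T rooted at r. *)
Definition keep3 (a : V + V) : bool :=
  match a with
  | inl v => [|| keptS v, hleaf v | inC v]
  | inr r => clade_root r
  end.

(* arcs of the graph obtained after steps (0)-(3) *)
Definition A3 (a b : V + V) : bool :=
  match a, b with
  | inl x, inl y =>
      [|| [&& keptS x || hleaf x, keptS y || hleaf y & E x y],
          [&& inC x, inC y & E x y]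
        | [&& keptS x, hleaf y & newarc x y]]
  | inl x, inr r => [&& clade_root r, keptS x & E x r || newarc x r]
  | inr r, inl y => clade_root r && (y == r)
  | inr _, inr _ => false
  end.

(* step (4): nodes with exactly one parent and one child are suppressed *)
Definition elem3 (b : V + V) : bool :=
  [&& keep3 b, #|[set a | A3 a b]| == 1 & #|[set c | A3 b c]| == 1].
Definition A3e : rel (V + V) := fun x y => A3 x y && elem3 y.

(* R(N): node set keepR, arc relation AR, leaf labels labR *)
Definition keepR (a : V + V) : bool :=
  if has_conv then keep3 a && ~~ elem3 a
  else (if a is inl _ then true else false).

Definition AR (a b : V + V) : bool :=
  if has_conv then
    [&& keepR a, keepR b & [exists c, connect A3e a c && A3 c b]]
  else
    match a, b with inl x, inl y => E x y | _, _ => false end.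

Definition labR (a : V + V) : option S :=
  if a is inl v then labN v else None.

End Network.

(* Isomorphism of leaf-labelled digraphs given as (node predicate, arc
   relation, labelling) on finite ambient types. *)
Definition ldag_iso (S W1 W2 : finType)
    (k1 : pred W1) (A1 : rel W1) (l1 : W1 -> option S)
    (k2 : pred W2) (A2 : rel W2) (l2 : W2 -> option S) : Prop :=
  exists f : W1 -> W2,
    [/\ {in k1, forall x, k2 (f x)},
        {in k2, forall y, exists2 x, k1 x & f x = y},
        {in k1 &, injective f},
        {in k1 &, forall x y, A2 (f x) (f y) = A1 x y} &
        {in k1, forall x, l2 (f x) = l1 x}].

Definition Ups_eq (S V1 V2 : finType) (E1 : rel V1) (lf1 : S -> V1)
    (E2 : rel V2) (lf2 : S -> V2) : Prop :=
  forall x : nlabel S, Ups_mult E1 lf1 x = Ups_mult E2 lf2 x.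

Definition indistinguishable (S V1 V2 : finType) (E1 : rel V1) (lf1 : S -> V1)
    (E2 : rel V2) (lf2 : S -> V2) : Prop :=
  ldag_iso (keepR E1 lf1) (AR E1 lf1) (labR lf1)
           (keepR E2 lf2) (AR E2 lf2) (labR lf2).

(* Main.v *)
Require Import Defs.
From mathcomp Require Import all_boot.
From mathcomp Require Import boolp.
From Stdlib Require List Permutation.
Import Permutation.
Set Implicit Arguments. Unset Strict Implicit. Unset Printing Implicit Defensive.


Section NL.
Variable T : Type.

Definition nlabel_ind' (P : nlabel T -> Prop)
  (Hl : forall s, P (NLeaf s))
  (Hn : forall l, (forall x, List.In x l -> P x) -> P (NNode l)) :
  forall t, P t :=
  fix F t := match t with
  | NLeaf s => Hl s
  | NNode l => Hn l ((fix G l : forall x, List.In x l -> P x :=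
       match l with
       | nil => fun x H => False_ind _ H
       | y :: l' => fun x H => match H with
                    | or_introl e => eq_ind y P (F y) x e
                    | or_intror H' => G l' x H' end
       end) l)
  end.

Lemma Forall2_flip (A B : Type) (R : A -> B -> Prop) l m :
  List.Forall2 R l m -> List.Forall2 (fun b a => R a b) m l.
Proof. by elim=> [|x y l' m' H _ IH]; constructor. Qed.

Lemma Forall2_impl_in (A B : Type) (R R' : A -> B -> Prop) l m :
  (forall x y, List.In x l -> R x y -> R' x y) ->
  List.Forall2 R l m -> List.Forall2 R' l m.
Proof.
move=> H H2; elim: H2 H => [|x y l' m' Hr _ IH] H; constructor.
- by apply: H => //; left.
- by apply: IH => a b Ha; apply: H; right.
Qed.

Lemma Forall2_comp (A : Type) (R : A -> A -> Prop) l a b :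
  (forall x, List.In x l -> forall y z, R x y -> R y z -> R x z) ->
  List.Forall2 R l a -> List.Forall2 R a b -> List.Forall2 R l b.
Proof.
move=> H H1; elim: H1 b H => [|x y l' a' Hr _ IH] b H H2.
  exact H2.
inversion H2; subst; constructor.
- by apply: (H x (or_introl erefl) y).
- by apply: IH => // u Hu; apply: H; right.
Qed.

Lemma nl_eqv_refl (x : nlabel T) : nl_eqv x x.
Proof.
elim/nlabel_ind': x => [s|l IH]; first by constructor.
apply: (nle_node (l2 := l)); first by apply: Permutation_refl.
elim: l IH => [|y l IHl] IH; constructor.
- by apply: IH; left.
- by apply: IHl => z Hz; apply: IH; right.
Qed.

Lemma nl_eqv_sym (x y : nlabel T) : nl_eqv x y -> nl_eqv y x.
Proof.
elim/nlabel_ind': x y => [s|l1 IH] y H; inversion H; subst; first by constructor.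
have H3 : List.Forall2 (fun a b => nl_eqv b a) l2 l3.
  apply: Forall2_impl_in H2 => a b Ha Hab; apply: IH => //.
  by apply: Permutation_in Ha; apply: Permutation_sym.
have [l3' [Hp Hf]] := Permutation_Forall2 (Permutation_sym H1) H3.
apply: (nle_node Hp).
by apply: Forall2_flip.
Qed.

Lemma nl_eqv_trans (x y z : nlabel T) : nl_eqv x y -> nl_eqv y z -> nl_eqv x z.
Proof.
elim/nlabel_ind': x y z => [s|l1 IH] y z H H'; inversion H; subst; first by [].
inversion H'; subst.
have [l2' [Hp Hf]] := Permutation_Forall2 H3 (Forall2_flip H2).
apply: (nle_node (Permutation_trans H1 Hp)).
apply: Forall2_comp H4.
  move=> u Hu; apply: IH.
  by apply: Permutation_in Hu; apply: Permutation_sym; apply: Permutation_trans H1 Hp.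
exact: Forall2_flip Hf.
Qed.

Fixpoint nsize (t : nlabel T) : nat :=
  match t with NLeaf _ => 1 | NNode l => (sumn (map nsize l)).+1 end.

Lemma sumn_perm (l m : seq nat) : Permutation l m -> sumn l = sumn m.
Proof.
elim=> //= [x l' m' _ -> | x y l' | l' m' k _ -> _ ->] //.
by rewrite addnCA.
Qed.

Lemma nsize_eqv (x y : nlabel T) : nl_eqv x y -> nsize x = nsize y.
Proof.
elim/nlabel_ind': x y => [s|l1 IH] y H; inversion H; subst => //=.
congr S.
rewrite (sumn_perm (Permutation_map nsize H1)).
have : forall u, List.In u l2 -> forall v, nl_eqv u v -> nsize u = nsize v.
  by move=> u Hu; apply: IH; apply: Permutation_in Hu; apply: Permutation_sym.
elim: H2 => //= a b l m Hab _ IH2 Hi.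
by rewrite (Hi a (or_introl erefl) b Hab) IH2 // => u Hu; apply: Hi; right.
Qed.
End NL.


Section Net.
Variables (S V : finType) (E : rel V) (lf : S -> V).
Hypothesis HN : is_network E lf.

Definition desc (u : V) : {set V} := [set w | connect E u w].

Lemma acyc u v : E u v -> ~~ connect E v u.
Proof. by case: HN => H _ _ _; apply: H. Qed.

Lemma desc_lt u v : E u v -> #|desc v| < #|desc u|.
Proof.
move=> Euv; apply: proper_card; apply/properP; split.
  apply/subsetP => w; rewrite !inE => Hvw.
  by apply: connect_trans Hvw; apply: connect1.
exists u; first by rewrite inE connect0.
by rewrite inE; apply: acyc.
Qed.

Lemma desc_pos u : 0 < #|desc u|.
Proof. by apply/card_gt0P; exists u; rewrite inE connect0. Qed.

Lemma fuel_stable k k' v : #|desc v| <= k -> k <= k' ->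
  nlab_fuel E lf k v = nlab_fuel E lf k' v.
Proof.
elim: k k' v => [|k IH] k' v Hd Hk; first by move: (desc_pos v); rewrite lt0n -leqn0 Hd.
case: k' Hk => // k' Hk /=.
case: ifP => // _; congr NNode; apply/eq_in_map => w.
rewrite mem_enum inE => Evw; apply: IH => //.
by rewrite -ltnS; apply: leq_trans Hd; apply: desc_lt.
Qed.

Lemma leaf_ex v : is_leaf E v -> exists s, lf s = v.
Proof. by case: HN => _ _ _ H /H. Qed.

Lemma lf_leaf s : is_leaf E (lf s).
Proof. by case: HN => _ _ _ H; apply/H; exists s. Qed.

Lemma lf_inj : injective lf.
Proof. by case: HN. Qed.

Lemma labN_lf s : labN lf (lf s) = Some s.
Proof.
rewrite /labN; case: pickP => [s' /eqP H|/(_ s)]; last by rewrite eqxx.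
by rewrite (lf_inj H).
Qed.

Lemma nlab_leaf s : nlab E lf (lf s) = NLeaf s.
Proof.
rewrite /nlab; have : 0 < #|V| by apply/card_gt0P; exists (lf s).
case: #|V| => //= n _.
by rewrite lf_leaf labN_lf.
Qed.

Lemma nlab_node v : ~~ is_leaf E v ->
  nlab E lf v = NNode (map (nlab E lf) (enum (children E v))).
Proof.
move=> Hv.
have [n Hn] : exists n, #|V| = n.+1.
  by move: (max_card (desc v)) (desc_pos v); case: #|V| => [|n]; [rewrite leqn0 => /eqP -> | exists n].
rewrite /nlab {1}Hn /= (negbTE Hv); congr NNode; apply/eq_in_map => w.
rewrite mem_enum inE => Evw; apply: fuel_stable; last by rewrite Hn.
by rewrite -ltnS -Hn; apply: leq_trans (max_card (desc v)); apply: desc_lt.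
Qed.

Lemma nlab_leafE v s : nlab E lf v = NLeaf s -> lf s = v.
Proof.
case: (boolP (is_leaf E v)) => [/leaf_ex [s' <-]|/nlab_node -> //].
by rewrite nlab_leaf => -[->].
Qed.

Lemma nlab_nodeE v l : nlab E lf v = NNode l -> ~~ is_leaf E v.
Proof.
by case: (boolP (is_leaf E v)) => // /leaf_ex [s' <-]; rewrite nlab_leaf.
Qed.

Lemma sumn_map_le (T : eqType) (f : T -> nat) x s : x \in s -> f x <= sumn (map f s).
Proof.
elim: s => //= y s IH; rewrite inE => /orP [/eqP ->|/IH H]; first exact: leq_addr.
by apply: leq_trans H (leq_addl _ _).
Qed.

Lemma nsize_child u v : E u v -> nsize (nlab E lf v) < nsize (nlab E lf u).
Proof.
move=> Euv.
have Hu : ~~ is_leaf E u by apply/forallPn; exists v; rewrite negbK.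
rewrite (nlab_node Hu) /= ltnS -map_comp.
by apply: (sumn_map_le (fun w => nsize (nlab E lf w))); rewrite mem_enum inE.
Qed.

Lemma nsize_desc u v : connect E u v -> nsize (nlab E lf v) <= nsize (nlab E lf u).
Proof.
move/connectP=> [p Hp ->]; elim: p u Hp => //= w p IH u /andP [Euw Hp].
by apply: leq_trans (IH _ Hp) (ltnW (nsize_child Euw)).
Qed.

Lemma connect_first u v : connect E u v -> u != v -> exists2 c, E u c & connect E c v.
Proof.
move/connectP=> [[|c p] /= Hp ->]; first by rewrite eqxx.
case/andP: Hp => Euc Hp _; exists c => //; apply/connectP; by exists p.
Qed.

Lemma connect_last u v : connect E u v -> u != v -> exists2 c, connect E u c & E c v.
Proof.
move/connectP=> [p]; elim/last_ind: p => [|p c _] /= Hp ->; first by rewrite eqxx.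
rewrite last_rcons => _; move: Hp; rewrite rcons_path => /andP [Hp' Ec].
by exists (last u p) => //; apply/connectP; exists p.
Qed.

Lemma nsize_sdesc u v : connect E u v -> u != v -> nsize (nlab E lf v) < nsize (nlab E lf u).
Proof.
move=> H Hne; case: (connect_first H Hne) => c Euc Hc.
by apply: leq_trans (nsize_child Euc); rewrite ltnS nsize_desc.
Qed.

Lemma reach_leaf u : exists s, connect E u (lf s).
Proof.
move: {2}#|desc u| (leqnn #|desc u|) => k; elim: k u => [|k IH] u Hk.
  by move: (desc_pos u); rewrite lt0n -leqn0 Hk.
case: (boolP (is_leaf E u)) => [/leaf_ex [s <-]|]; first by exists s; apply: connect0.
move/forallPn => [w]; rewrite negbK => Euw.
have [s Hs] : exists s, connect E w (lf s).
  by apply: IH; rewrite -ltnS; apply: leq_trans Hk; apply: desc_lt.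
by exists s; apply: connect_trans Hs; apply: connect1.
Qed.

End Net.


Definition sim (S V1 V2 : finType) (E1 : rel V1) (lf1 : S -> V1)
  (E2 : rel V2) (lf2 : S -> V2) (u1 : V1) (u2 : V2) :=
  nl_eqv (nlab E1 lf1 u1) (nlab E2 lf2 u2).

Lemma In_map_mem (T : eqType) (U : Type) (f : T -> U) x s : x \in s -> List.In (f x) (map f s).
Proof. elim: s => //= y s IH; rewrite inE => /orP [/eqP ->|/IH]; by [left|right]. Qed.

Lemma In_map_inv (T : eqType) (U : Type) (f : T -> U) y s :
  List.In y (map f s) -> exists2 x, x \in s & y = f x.
Proof.
elim: s => //= x s IH [<-|/IH [z Hz ->]]; first by exists x; rewrite ?inE ?eqxx.
by exists z; rewrite // inE Hz orbT.
Qed.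

Lemma Forall2_In_l (A B : Type) (R : A -> B -> Prop) l m x :
  List.Forall2 R l m -> List.In x l -> exists y, List.In y m /\ R x y.
Proof.
elim=> //= a b l' m' Hab _ IH [<-|/IH [y [Hy Hr]]]; first by exists b; split=> //; left.
by exists y; split=> //; right.
Qed.

Lemma eqv_leafL (T : Type) (s : T) y : nl_eqv (NLeaf s) y -> y = NLeaf s.
Proof. by move=> H; inversion H. Qed.

Lemma eqv_nodeL (T : Type) (l1 : seq (nlabel T)) y : nl_eqv (NNode l1) y ->
  exists l2 l3, [/\ y = NNode l3, Permutation l1 l2 & List.Forall2 nl_eqv l2 l3].
Proof. by move=> H; inversion H; exists l2, l3. Qed.

Lemma sim_sym (S V1 V2 : finType) (E1 : rel V1) (lf1 : S -> V1)
  (E2 : rel V2) (lf2 : S -> V2) u1 u2 :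
  sim E1 lf1 E2 lf2 u1 u2 -> sim E2 lf2 E1 lf1 u2 u1.
Proof. exact: nl_eqv_sym. Qed.

Lemma sim_trans (S V1 V2 V3 : finType) (E1 : rel V1) (lf1 : S -> V1)
  (E2 : rel V2) (lf2 : S -> V2) (E3 : rel V3) (lf3 : S -> V3) u1 u2 u3 :
  sim E1 lf1 E2 lf2 u1 u2 -> sim E2 lf2 E3 lf3 u2 u3 -> sim E1 lf1 E3 lf3 u1 u3.
Proof. exact: nl_eqv_trans. Qed.

Lemma sim_refl (S V1 : finType) (E1 : rel V1) (lf1 : S -> V1) u :
  sim E1 lf1 E1 lf1 u u.
Proof. exact: nl_eqv_refl. Qed.

Notation sim_ := sim (only parsing).

Section Two.
Variables (S V1 V2 : finType) (E1 : rel V1) (lf1 : S -> V1) (E2 : rel V2) (lf2 : S -> V2).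
Hypotheses (HN1 : is_network E1 lf1) (HN2 : is_network E2 lf2).
Local Notation sim := (sim E1 lf1 E2 lf2).

Lemma sim_lf s u2 : sim (lf1 s) u2 -> lf2 s = u2.
Proof.
rewrite /sim (nlab_leaf HN1) => Hs; have H := eqv_leafL Hs.
exact: (nlab_leafE HN2).
Qed.

Lemma sim_leaf u1 u2 : sim u1 u2 -> is_leaf E1 u1 = is_leaf E2 u2.
Proof.
case: (boolP (is_leaf E1 u1)) => [/(leaf_ex HN1) [s <-] /sim_lf <-|Hl].
  by rewrite (lf_leaf HN2).
rewrite /sim (nlab_node HN1 Hl) => /eqv_nodeL [l2 [l3 [H _ _]]].
by apply/esym/negbTE; apply: (nlab_nodeE HN2 H).
Qed.

Lemma sim_labN u1 u2 : sim u1 u2 -> labN lf1 u1 = labN lf2 u2.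
Proof.
move=> H; case: (boolP (is_leaf E1 u1)) => [/(leaf_ex HN1) [s Hs]|Hl].
  by move: H; rewrite -Hs => /sim_lf <-; rewrite (labN_lf HN1) (labN_lf HN2).
have Hl2 : ~~ is_leaf E2 u2 by rewrite -(sim_leaf H).
rewrite /labN; case: pickP => [s /eqP Hs|_]; first by move: Hl; rewrite -Hs (lf_leaf HN1).
case: pickP => [s /eqP Hs|//]; by move: Hl2; rewrite -Hs (lf_leaf HN2).
Qed.

Lemma sim_child u1 u2 c1 : sim u1 u2 -> E1 u1 c1 -> exists2 c2, E2 u2 c2 & sim c1 c2.
Proof.
move=> H Ec.
have Hl : ~~ is_leaf E1 u1 by apply/forallPn; exists c1; rewrite negbK.
have Hl2 : ~~ is_leaf E2 u2 by rewrite -(sim_leaf H).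
move: H; rewrite /sim (nlab_node HN1 Hl) (nlab_node HN2 Hl2) => /eqv_nodeL [l2 [l3 [[<-] H2 H4]]].
have Hin : List.In (nlab E1 lf1 c1) l2.
  apply: (Permutation_in _ H2); apply: In_map_mem; by rewrite mem_enum inE.
have [y [Hy Hr]] := Forall2_In_l H4 Hin.
have [c2 Hc2 Hyc] := In_map_inv Hy; subst y.
by exists c2 => //; move: Hc2; rewrite mem_enum inE.
Qed.

Lemma sim_desc u1 u2 d1 : sim u1 u2 -> connect E1 u1 d1 -> exists2 d2, connect E2 u2 d2 & sim d1 d2.
Proof.
move=> H /connectP [p Hp ->]; elim: p u1 u2 H Hp => /= [|w p IH] u1 u2 H.
  by move=> _; exists u2 => //; apply: connect0.
case/andP => Euw Hp; have [c2 Ec2 Hc2] := sim_child H Euw.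
have [d2 Hd2 Hs] := IH _ _ Hc2 Hp; exists d2 => //.
by apply: connect_trans Hd2; apply: connect1.
Qed.

Lemma sim_cluster u1 u2 : sim u1 u2 -> cluster E1 lf1 u1 \subset cluster E2 lf2 u2.
Proof.
move=> H; apply/subsetP => s; rewrite !inE => /(sim_desc H) [d2 Hd Hs].
by rewrite (sim_lf Hs).
Qed.

End Two.

Lemma sim_clusterE (S V1 V2 : finType) (E1 : rel V1) (lf1 : S -> V1) (E2 : rel V2) (lf2 : S -> V2)
  (HN1 : is_network E1 lf1) (HN2 : is_network E2 lf2) u1 u2 :
  sim E1 lf1 E2 lf2 u1 u2 -> cluster E1 lf1 u1 = cluster E2 lf2 u2.
Proof.
move=> H; apply/eqP; rewrite eqEsubset (sim_cluster HN1 HN2 H).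
by rewrite (sim_cluster HN2 HN1 (sim_sym H)).
Qed.


Section Dup.
Variables (S V : finType) (E : rel V) (lf : S -> V).
Hypothesis HN : is_network E lf.

Lemma tree_parent y z w : is_tree_node E y -> E z y -> E w y -> z = w.
Proof.
move=> Ht Ez Ew; have /card_le1_eqP H := Ht.
by apply: H; rewrite inE.
Qed.

Lemma inC_desc v x : inC E v -> connect E v x -> inC E x.
Proof.
move=> /forallP H Hx; apply/forallP => y; apply/implyP => Hy.
by move: (H y) => /implyP; apply; apply: connect_trans Hy.
Qed.

Lemma inC_tree v : inC E v -> is_tree_node E v.
Proof. by move=> /forallP /(_ v) /implyP; apply; apply: connect0. Qed.

Lemma tree_meet v x w : inC E v -> connect E v x -> connect E w x ->
  connect E v w || connect E w v.
Proof.
move=> Hv Hvx /connectP [p Hp Hx]; elim: p w Hp Hx => /= [|y p IH] w.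
  by move=> _ <-; rewrite Hvx.
case/andP => Ewy Hp Hx; case/orP: (IH _ Hp Hx) => H.
  case: (eqVneq v y) => [Hvy|Hne].
    by rewrite Hvy orbC (connect1 Ewy).
  have [z Hz Ezy] := connect_last H Hne.
  have Ht : is_tree_node E y by apply: inC_tree; apply: inC_desc H.
  by rewrite -(tree_parent Ht Ezy Ewy) Hz.
by rewrite orbC (connect_trans (connect1 Ewy) H).
Qed.

Lemma sim_sdesc v w : sim E lf E lf v w -> connect E v w -> v = w.
Proof.
move=> Hs Hc; apply/eqP/negP => /negP Hne.
have := nsize_sdesc HN Hc Hne; rewrite (nsize_eqv Hs); by rewrite ltnn.
Qed.

Lemma dup_notC v w : sim E lf E lf v w -> v != w -> ~~ inC E v.
Proof.
move=> Hs Hne; apply/negP => Hv.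
have [s Hvs] := reach_leaf HN v.
have Hws : connect E w (lf s).
  by move: (sim_clusterE HN HN Hs) => /setP /(_ s); rewrite !inE Hvs => <-.
case/orP: (tree_meet Hv Hvs Hws) => H.
  by move: Hne; rewrite (sim_sdesc Hs H) eqxx.
by move: Hne; rewrite (sim_sdesc (sim_sym Hs) H) eqxx.
Qed.

Definition uniqN (v : V) := forall w, sim E lf E lf w v -> w = v.

Lemma inC_uniq v : inC E v -> uniqN v.
Proof.
move=> Hv w Hw; apply/eqP/negP => /negP Hne.
rewrite eq_sym in Hne; by move: (dup_notC (sim_sym Hw) Hne); rewrite Hv.
Qed.

Lemma leaf_uniq s : uniqN (lf s).
Proof. by move=> w /sim_sym /(sim_lf HN HN). Qed.

End Dup.


Lemma card_split (T : finType) (P Q : T -> Prop) : (forall x, Q x -> P x) ->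
  #|[set x | `[<P x>]]| = #|[set x | `[<Q x>]]| + #|[set x | `[< P x /\ ~ Q x >]]|.
Proof.
move=> HQ; rewrite -(cardsID [set x | `[<Q x>]] [set x | `[<P x>]]).
congr addn; apply: eq_card => x; rewrite !inE.
  apply/andP/asboolP => [[_ /asboolP //]|Hq]; split; apply/asboolP => //; exact: HQ.
apply/andP/asboolP => [[/asboolP Hq /asboolP Hp]|[Hp Hq]]; first by split.
by split; apply/asboolP.
Qed.

Section Ups.
Variables (S V1 V2 : finType) (E1 : rel V1) (lf1 : S -> V1) (E2 : rel V2) (lf2 : S -> V2).
Hypotheses (HN1 : is_network E1 lf1) (HN2 : is_network E2 lf2).
Hypothesis HU : Ups_eq E1 lf1 E2 lf2.
Local Notation sim := (sim E1 lf1 E2 lf2).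

Lemma partner v1 : exists v2, sim v1 v2.
Proof.
have : 0 < Ups_mult E2 lf2 (nlab E1 lf1 v1).
  rewrite -HU; apply/card_gt0P; exists v1; rewrite inE; apply/asboolP.
  exact: nl_eqv_refl.
move/card_gt0P => [v2]; rewrite inE => /asboolP H; exists v2.
exact: nl_eqv_sym.
Qed.

Lemma partner' v2 : exists v1, sim v1 v2.
Proof.
have : 0 < Ups_mult E1 lf1 (nlab E2 lf2 v2).
  rewrite HU; apply/card_gt0P; exists v2; rewrite inE; apply/asboolP.
  exact: nl_eqv_refl.
by move/card_gt0P => [v1]; rewrite inE => /asboolP H; exists v1.
Qed.

Lemma count_transfer (P1 : V1 -> Prop) (P2 : V2 -> Prop) :
  (forall v1 v2, sim v1 v2 -> (P1 v1 <-> P2 v2)) ->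
  #|[set v | `[< P1 v >]]| = #|[set v | `[< P2 v >]]|.
Proof.
move: {2}#|[set v | `[< P1 v >]]| (leqnn #|[set v | `[< P1 v >]]|) => n.
elim: n P1 P2 => [|n IH] P1 P2 Hn H12.
- move: Hn; rewrite leqn0 cards_eq0 => /eqP H0.
  rewrite H0 cards0; apply/esym/eqP; rewrite cards_eq0; apply/eqP/setP => w2.
  rewrite inE in_set0; apply/negP => /asboolP Hw.
  have [v1 Hs] := partner' w2.
  have : v1 \in [set v | `[< P1 v >]] by rewrite inE; apply/asboolP; apply/(H12 _ _ Hs).
  by rewrite H0 in_set0.
case: (set_0Vmem [set v | `[< P1 v >]]) => [H0|[v Hv]].
  apply: IH => //; by rewrite H0 cards0.
move: Hv; rewrite inE => /asboolP Hv.
have [v2 Hv2] := partner v.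
have HC1 : forall w, sim_ E1 lf1 E1 lf1 w v -> P1 w.
  move=> w Hw; apply/(H12 _ v2); first exact: sim_trans Hw Hv2.
  by apply/(H12 _ _ Hv2).
have HC2 : forall w, sim_ E2 lf2 E1 lf1 w v -> P2 w.
  by move=> w Hw; apply/(H12 v); [apply: sim_sym|].
rewrite (card_split HC1) (card_split HC2).
have -> : #|[set x | `[< sim_ E1 lf1 E1 lf1 x v >]]| = #|[set x | `[< sim_ E2 lf2 E1 lf1 x v >]]|.
  exact: (HU (nlab E1 lf1 v)).
congr addn; apply: IH.
  rewrite -ltnS; apply: leq_trans Hn.
  rewrite (card_split HC1) -add1n leq_add2r; apply/card_gt0P; exists v.
  by rewrite inE; apply/asboolP; apply: sim_refl.
move=> v1 w2 Hs; split=> [[H1 H2]|[H1 H2]]; split.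
- by apply/(H12 _ _ Hs).
- by move=> H3; apply: H2; apply: sim_trans Hs H3.
- by apply/(H12 _ _ Hs).
- by move=> H3; apply: H2; apply: sim_trans (sim_sym Hs) H3.
Qed.

Lemma uniq_transfer v1 v2 : sim v1 v2 -> uniqN E1 lf1 v1 -> uniqN E2 lf2 v2.
Proof.
move=> Hs Hu.
have Hc := @count_transfer (fun w => sim_ E1 lf1 E1 lf1 w v1) (fun w => sim_ E2 lf2 E2 lf2 w v2).
have H1 : #|[set w | `[< sim_ E1 lf1 E1 lf1 w v1 >]]| <= 1.
  apply/card_le1_eqP => x y; rewrite !inE => /asboolP /Hu -> /asboolP /Hu -> //.
rewrite Hc in H1; last first.
  move=> w1 w2 Hw; split=> H.
  - exact: sim_trans (sim_sym Hw) (sim_trans H Hs).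
  - exact: sim_trans Hw (sim_trans H (sim_sym Hs)).
move=> w Hw; move/card_le1_eqP: H1 => H1; apply: H1; rewrite inE; apply/asboolP => //.
exact: sim_refl.
Qed.

Lemma parents_transfer v1 v2 : sim v1 v2 -> uniqN E1 lf1 v1 ->
  #|parents E1 v1| = #|parents E2 v2|.
Proof.
move=> Hs Hu; have Hu2 := uniq_transfer Hs Hu.
have Hc := @count_transfer (fun u => exists2 c, E1 u c & sim_ E1 lf1 E1 lf1 c v1)
                           (fun u => exists2 c, E2 u c & sim_ E2 lf2 E2 lf2 c v2).
have -> : parents E1 v1 = [set u | `[< exists2 c, E1 u c & sim_ E1 lf1 E1 lf1 c v1 >]].
  apply/setP => u; rewrite !inE; apply/idP/asboolP => [H|[c Hc1 /Hu <- //]].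
  by exists v1 => //; apply: sim_refl.
have -> : parents E2 v2 = [set u | `[< exists2 c, E2 u c & sim_ E2 lf2 E2 lf2 c v2 >]].
  apply/setP => u; rewrite !inE; apply/idP/asboolP => [H|[c Hc1 /Hu2 <- //]].
  by exists v2 => //; apply: sim_refl.
apply: Hc => u1 u2 Hsu; split=> [[c1 Ec1 Hc1]|[c2 Ec2 Hc2]].
  have [c2 Ec2 Hc2] := sim_child HN1 HN2 Hsu Ec1.
  by exists c2 => //; apply: sim_trans (sim_sym Hc2) (sim_trans Hc1 Hs).
have [c1 Ec1 Hc1] := sim_child HN2 HN1 (sim_sym Hsu) Ec2.
by exists c1 => //; apply: sim_trans (sim_sym Hc1) (sim_trans Hc2 (sim_sym Hs)).
Qed.

End Ups.


Lemma Ups_eq_sym (S V1 V2 : finType) (E1 : rel V1) (lf1 : S -> V1) (E2 : rel V2) (lf2 : S -> V2) :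
  Ups_eq E1 lf1 E2 lf2 -> Ups_eq E2 lf2 E1 lf1.
Proof. by move=> H x; rewrite H. Qed.

Lemma nconv_uniq (S V : finType) (E : rel V) (lf : S -> V) (HN : is_network E lf) v :
  ~~ conv_other E lf v -> uniqN E lf v.
Proof.
move=> Hc w Hw; case: (eqVneq w v) => // Hne; move/negP: Hc; case.
apply/existsP; exists w; rewrite Hne /=.
by rewrite (sim_clusterE HN HN Hw).
Qed.

Lemma has_convE (S V : finType) (E : rel V) (lf : S -> V) :
  has_conv E lf = [exists u, conv_other E lf u].
Proof.
apply/existsP/existsP => [[u /existsP [w /andP [H1 H2]]]|[u /existsP [w /andP [H1 H2]]]].
  by exists u; apply/existsP; exists w; rewrite eq_sym H1 /= eq_sym.
by exists w; apply/existsP; exists u; rewrite H1.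
Qed.

Section L6.
Variables (S V1 V2 : finType) (E1 : rel V1) (lf1 : S -> V1) (E2 : rel V2) (lf2 : S -> V2).
Hypotheses (HN1 : is_network E1 lf1) (HN2 : is_network E2 lf2).
Hypothesis HU : Ups_eq E1 lf1 E2 lf2.
Local Notation sim := (sim E1 lf1 E2 lf2).

Lemma tree_eq v1 v2 : sim v1 v2 -> uniqN E1 lf1 v1 ->
  is_tree_node E1 v1 = is_tree_node E2 v2.
Proof. by move=> Hs Hu; rewrite /is_tree_node (parents_transfer HN1 HN2 HU Hs Hu). Qed.

Lemma hyb_eq v1 v2 : sim v1 v2 -> uniqN E1 lf1 v1 ->
  is_hybrid E1 v1 = is_hybrid E2 v2.
Proof. by move=> Hs Hu; rewrite /is_hybrid (parents_transfer HN1 HN2 HU Hs Hu). Qed.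

Lemma inC_one v1 v2 : sim v1 v2 -> inC E1 v1 -> inC E2 v2.
Proof.
move=> Hs Hv; apply/forallP => y2; apply/implyP => Hy2.
have [y1 Hy1 Hs'] := sim_desc HN2 HN1 (sim_sym Hs) Hy2.
have HC : inC E1 y1 by apply: inC_desc Hy1.
rewrite -(tree_eq (sim_sym Hs') (inC_uniq HN1 HC)).
exact: inC_tree.
Qed.

Lemma conv_one v1 v2 : sim v1 v2 -> conv_other E1 lf1 v1 -> conv_other E2 lf2 v2.
Proof.
move=> Hs /existsP [w1 /andP [Hne /eqP Hcl]].
case: (boolP (conv_other E2 lf2 v2)) => // Hc2.
have Hu2 := nconv_uniq HN2 Hc2.
have Hu1 := uniq_transfer (Ups_eq_sym HU) (sim_sym Hs) Hu2.
have [w2 Hw2] := partner HU w1.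
case/negP: Hc2; apply/existsP; exists w2; apply/andP; split.
  apply/negP => /eqP Heq; subst w2; move/eqP: Hne; apply.
  by apply: Hu1; apply: sim_trans Hw2 (sim_sym Hs).
by rewrite -(sim_clusterE HN1 HN2 Hw2) Hcl (sim_clusterE HN1 HN2 Hs).
Qed.

Lemma E_one x1 x2 y1 y2 : sim x1 x2 -> sim y1 y2 -> uniqN E1 lf1 y1 ->
  E1 x1 y1 -> E2 x2 y2.
Proof.
move=> Hx Hy Hu Exy; have Hu2 := uniq_transfer HU Hy Hu.
have [c2 Ec2 Hc2] := sim_child HN1 HN2 Hx Exy.
by rewrite -(Hu2 c2) //; apply: sim_trans (sim_sym Hc2) Hy.
Qed.

End L6.

Section L7.
Variables (S V1 V2 : finType) (E1 : rel V1) (lf1 : S -> V1) (E2 : rel V2) (lf2 : S -> V2).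
Hypotheses (HN1 : is_network E1 lf1) (HN2 : is_network E2 lf2).
Hypothesis HU : Ups_eq E1 lf1 E2 lf2.
Local Notation sim := (sim E1 lf1 E2 lf2).
Let HU' := Ups_eq_sym HU.

Lemma inC_eq v1 v2 : sim v1 v2 -> inC E1 v1 = inC E2 v2.
Proof.
move=> Hs; apply/idP/idP; first exact: (inC_one HN1 HN2 HU Hs).
exact: (inC_one HN2 HN1 HU' (sim_sym Hs)).
Qed.

Lemma conv_eq v1 v2 : sim v1 v2 -> conv_other E1 lf1 v1 = conv_other E2 lf2 v2.
Proof.
move=> Hs; apply/idP/idP; first exact: (conv_one HN1 HN2 HU Hs).
exact: (conv_one HN2 HN1 HU' (sim_sym Hs)).
Qed.

Lemma E_eq x1 x2 y1 y2 : sim x1 x2 -> sim y1 y2 -> uniqN E1 lf1 y1 ->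
  E1 x1 y1 = E2 x2 y2.
Proof.
move=> Hx Hy Hu; apply/idP/idP; first exact: (E_one HN1 HN2 HU Hx Hy Hu).
apply: (E_one HN2 HN1 HU' (sim_sym Hx) (sim_sym Hy)).
exact: (uniq_transfer HU Hy Hu).
Qed.

Lemma intS_eq v1 v2 : sim v1 v2 -> internalS E1 v1 = internalS E2 v2.
Proof. by move=> Hs; rewrite /internalS (inC_eq Hs) (sim_leaf HN1 HN2 Hs). Qed.

Lemma hleaf_eq v1 v2 : sim v1 v2 -> hleaf E1 v1 = hleaf E2 v2.
Proof.
move=> Hs; rewrite /hleaf -(sim_leaf HN1 HN2 Hs).
case: (boolP (is_leaf E1 v1)) => //= /(leaf_ex HN1) [s Hl]; subst v1.
have Hu : uniqN E1 lf1 (lf1 s) := leaf_uniq HN1 (s:=s). exact: (hyb_eq HN1 HN2 HU Hs Hu).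
Qed.

Lemma removed_one v1 v2 : sim v1 v2 -> removed E1 lf1 v1 -> removed E2 lf2 v2.
Proof.
move=> Hs /andP [Hi /existsP [d1 /and3P [Hd Hc Hdv]]].
rewrite /removed -(intS_eq Hs) Hi /=.
case: (boolP (conv_other E1 lf1 v1)) => Hcv.
  by apply/existsP; exists v2; rewrite -(intS_eq Hs) Hi -(conv_eq Hs) Hcv connect0.
have Hu1 := nconv_uniq HN1 Hcv.
have Hu2 := uniq_transfer HU Hs Hu1.
have [d2 Hd2] := partner HU d1.
have [u2 Hu Hsu] := sim_desc HN1 HN2 Hd2 Hdv.
have Heq : u2 = v2 by apply: Hu2; apply: sim_trans (sim_sym Hsu) Hs.
subst u2; apply/existsP; exists d2.
by rewrite -(intS_eq Hd2) Hd -(conv_eq Hd2) Hc Hu.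
Qed.

Lemma croot_one r1 r2 : sim r1 r2 -> clade_root E1 r1 -> clade_root E2 r2.
Proof.
move=> Hs /andP [Hi /forallP Hp]; rewrite /clade_root -(inC_eq Hs) Hi /=.
apply/forallP => p2; apply/implyP => Ep2; apply/negP => Hp2.
have [p1 Hp1] := partner' HU p2.
have [c1 Ec1 Hc1] := sim_child HN2 HN1 (sim_sym Hp1) Ep2.
have Hc : c1 = r1 by apply: (inC_uniq HN1 Hi); apply: sim_trans (sim_sym Hc1) (sim_sym Hs).
subst c1; move: (Hp p1) => /implyP /(_ Ec1) /negP; apply.
by rewrite (inC_eq Hp1).
Qed.

Lemma has_conv_one : has_conv E1 lf1 -> has_conv E2 lf2.
Proof.
rewrite !has_convE => /existsP [u1 Hu1]; have [u2 Hs] := partner HU u1.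
by apply/existsP; exists u2; rewrite -(conv_eq Hs).
Qed.
End L7.

Section L8.
Variables (S V1 V2 : finType) (E1 : rel V1) (lf1 : S -> V1) (E2 : rel V2) (lf2 : S -> V2).
Hypotheses (HN1 : is_network E1 lf1) (HN2 : is_network E2 lf2).
Hypothesis HU : Ups_eq E1 lf1 E2 lf2.
Local Notation sim := (sim E1 lf1 E2 lf2).
Let HU' := Ups_eq_sym HU.

Lemma removed_eq v1 v2 : sim v1 v2 -> removed E1 lf1 v1 = removed E2 lf2 v2.
Proof.
move=> Hs; apply/idP/idP; first exact: (removed_one HN1 HN2 HU Hs).
exact: (removed_one HN2 HN1 HU' (sim_sym Hs)).
Qed.

Lemma croot_eq v1 v2 : sim v1 v2 -> clade_root E1 v1 = clade_root E2 v2.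
Proof.
move=> Hs; apply/idP/idP; first exact: (croot_one HN1 HN2 HU Hs).
exact: (croot_one HN2 HN1 HU' (sim_sym Hs)).
Qed.

Lemma has_conv_eq : has_conv E1 lf1 = has_conv E2 lf2.
Proof.
apply/idP/idP; first exact: (has_conv_one HN1 HN2 HU).
exact: (has_conv_one HN2 HN1 HU').
Qed.

Lemma keptS_eq v1 v2 : sim v1 v2 -> keptS E1 lf1 v1 = keptS E2 lf2 v2.
Proof. by move=> Hs; rewrite /keptS (intS_eq HN1 HN2 HU Hs) (removed_eq Hs). Qed.

Lemma newarc_one x1 x2 t1 t2 : sim x1 x2 -> sim t1 t2 -> uniqN E1 lf1 t1 ->
  newarc E1 lf1 x1 t1 -> newarc E2 lf2 x2 t2.
Proof.
move=> Hx Ht Hu /existsP [v1 /and3P [Hr Ev Hc]].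
have Hu2 := uniq_transfer HU Ht Hu.
have [c2 Ec2 Hc2] := sim_child HN1 HN2 Hx Ev.
have [t' Ht' Hst] := sim_desc HN1 HN2 Hc2 Hc.
have Heq : t' = t2 by apply: Hu2; apply: sim_trans (sim_sym Hst) Ht.
subst t'; apply/existsP; exists c2.
by rewrite -(removed_eq Hc2) Hr Ec2 Ht'.
Qed.
End L8.

Lemma newarc_eq (S V1 V2 : finType) (E1 : rel V1) (lf1 : S -> V1) (E2 : rel V2) (lf2 : S -> V2)
  (HN1 : is_network E1 lf1) (HN2 : is_network E2 lf2) (HU : Ups_eq E1 lf1 E2 lf2)
  x1 x2 t1 t2 : sim E1 lf1 E2 lf2 x1 x2 -> sim E1 lf1 E2 lf2 t1 t2 -> uniqN E1 lf1 t1 ->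
  newarc E1 lf1 x1 t1 = newarc E2 lf2 x2 t2.
Proof.
move=> Hx Ht Hu; apply/idP/idP; first exact: (newarc_one HN1 HN2 HU Hx Ht Hu).
apply: (newarc_one HN2 HN1 (Ups_eq_sym HU) (sim_sym Hx) (sim_sym Ht)).
exact: (uniq_transfer HU Ht Hu).
Qed.


Definition nodeOf (T : Type) (a : T + T) := match a with inl v => v | inr v => v end.

Section One.
Variables (S V : finType) (E : rel V) (lf : S -> V).
Hypothesis HN : is_network E lf.

Lemma kept_nconv v : keptS E lf v -> ~~ conv_other E lf v.
Proof.
case/andP => Hi Hr; apply/negP => Hc; move/negP: Hr; apply.
by rewrite /removed Hi /=; apply/existsP; exists v; rewrite Hi Hc connect0.
Qed.

Lemma keep3_uniq a : keep3 E lf a -> uniqN E lf (nodeOf a).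
Proof.
case: a => [v|r] /=.
  case/or3P => [/kept_nconv/(nconv_uniq HN) //|/andP [/(leaf_ex HN) [s <-] _]|/(inC_uniq HN) //].
  exact: (leaf_uniq HN (s:=s)).
by case/andP => /(inC_uniq HN).
Qed.

Lemma A3_keep a b : A3 E lf a b -> keep3 E lf a && keep3 E lf b.
Proof.
case: a => [x|r]; case: b => [y|r'] //=.
- case/or3P => [/and3P [H1 H2 _]|/and3P [H1 H2 _]|/and3P [H1 H2 _]].
  + by move: H1 H2 => /orP [] -> /orP [] ->; rewrite ?orbT.
  + by rewrite H1 H2 !orbT.
  + by rewrite H1 H2 orbT.
- by case/and3P => -> -> _.
- case/andP => H /eqP ->; rewrite H /=; case/andP: H => -> _; by rewrite !orbT.
Qed.
End One.

Section Main.
Variables (S V1 V2 : finType) (E1 : rel V1) (lf1 : S -> V1) (E2 : rel V2) (lf2 : S -> V2).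
Hypotheses (HN1 : is_network E1 lf1) (HN2 : is_network E2 lf2).
Hypothesis HU : Ups_eq E1 lf1 E2 lf2.
Variable g : V1 -> V2.
Hypothesis Hg : forall v, sim E1 lf1 E2 lf2 v (g v).

Definition fm (a : V1 + V1) : V2 + V2 :=
  match a with inl v => inl (g v) | inr r => inr (g r) end.

Lemma g_inj v w : uniqN E1 lf1 v -> g w = g v -> w = v.
Proof. by move=> Hu Heq; apply: Hu; apply: sim_trans (Hg w) _; rewrite Heq; apply: sim_sym. Qed.

Lemma g_eqE v w : uniqN E1 lf1 v -> (g w == g v) = (w == v).
Proof. by move=> Hu; apply/eqP/eqP => [/(g_inj Hu)|->]. Qed.

Lemma g_surj y : uniqN E2 lf2 y -> exists2 x, g x = y & uniqN E1 lf1 x.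
Proof.
move=> Hu; have [x Hx] := partner' HU y.
have Hgx : g x = y by apply: Hu; apply: sim_trans (sim_sym (Hg x)) Hx.
exists x => //; apply: (uniq_transfer (Ups_eq_sym HU) (sim_sym Hx) Hu).
Qed.

Lemma keep3_eq a : keep3 E2 lf2 (fm a) = keep3 E1 lf1 a.
Proof.
case: a => [v|r] /=; last by rewrite (croot_eq HN1 HN2 HU (Hg r)).
by rewrite -(keptS_eq HN1 HN2 HU (Hg v)) -(hleaf_eq HN1 HN2 HU (Hg v)) -(inC_eq HN1 HN2 HU (Hg v)).
Qed.

Lemma A3_eq a b : keep3 E1 lf1 a -> keep3 E1 lf1 b ->
  A3 E2 lf2 (fm a) (fm b) = A3 E1 lf1 a b.
Proof.
move=> Ha Hb; have Hub := keep3_uniq HN1 Hb.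
case: a Ha => [x|r] Ha; case: b Hb Hub => [y|r'] Hb Hub //=.
- rewrite -(keptS_eq HN1 HN2 HU (Hg x)) -(keptS_eq HN1 HN2 HU (Hg y)).
  rewrite -(hleaf_eq HN1 HN2 HU (Hg x)) -(hleaf_eq HN1 HN2 HU (Hg y)).
  rewrite -(inC_eq HN1 HN2 HU (Hg x)) -(inC_eq HN1 HN2 HU (Hg y)).
  rewrite -(E_eq HN1 HN2 HU (Hg x) (Hg y) Hub).
  by rewrite -(newarc_eq HN1 HN2 HU (Hg x) (Hg y) Hub).
- rewrite -(croot_eq HN1 HN2 HU (Hg r')) -(keptS_eq HN1 HN2 HU (Hg x)).
  rewrite -(E_eq HN1 HN2 HU (Hg x) (Hg r') Hub).
  by rewrite -(newarc_eq HN1 HN2 HU (Hg x) (Hg r') Hub).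
- have Hur := keep3_uniq HN1 Ha.
  by rewrite -(croot_eq HN1 HN2 HU (Hg r)) (g_eqE _ Hur).
Qed.

Lemma fm_surj b : keep3 E2 lf2 b -> exists2 a, keep3 E1 lf1 a & fm a = b.
Proof.
move=> Hb; have Hu := keep3_uniq HN2 Hb.
case: b Hb Hu => [y|r] Hb Hu /=; have [x Hx _] := g_surj Hu.
- by exists (inl x); rewrite -?keep3_eq /= Hx.
- by exists (inr x); rewrite -?keep3_eq /= Hx.
Qed.

Lemma fm_inj a b : keep3 E1 lf1 a -> keep3 E1 lf1 b -> fm a = fm b -> a = b.
Proof.
move=> Ha Hb; have Hu := keep3_uniq HN1 Hb.
by case: a Ha => [x|r] Ha; case: b Hb Hu => [y|r'] Hb Hu //= [/(g_inj Hu) ->].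
Qed.

Lemma card_A3_in b : keep3 E1 lf1 b ->
  #|[set a | A3 E2 lf2 a (fm b)]| = #|[set a | A3 E1 lf1 a b]|.
Proof.
move=> Hb.
have -> : [set a | A3 E2 lf2 a (fm b)] = fm @: [set a | A3 E1 lf1 a b].
  apply/setP => a2; rewrite inE; apply/idP/imsetP => [H|[a1 + ->]].
    have /andP [Ha2 _] := A3_keep H.
    have [a1 Ha1 Heq] := fm_surj Ha2; subst a2.
    by exists a1 => //; rewrite inE -A3_eq.
  rewrite inE => H; have /andP [Ha1 _] := A3_keep H; by rewrite A3_eq.
rewrite card_in_imset // => x y; rewrite !inE => Hx Hy.
apply: fm_inj; [by case/andP: (A3_keep Hx)|by case/andP: (A3_keep Hy)].
Qed.

Lemma card_A3_out b : keep3 E1 lf1 b ->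
  #|[set c | A3 E2 lf2 (fm b) c]| = #|[set c | A3 E1 lf1 b c]|.
Proof.
move=> Hb.
have -> : [set c | A3 E2 lf2 (fm b) c] = fm @: [set c | A3 E1 lf1 b c].
  apply/setP => a2; rewrite inE; apply/idP/imsetP => [H|[a1 + ->]].
    have /andP [_ Ha2] := A3_keep H.
    have [a1 Ha1 Heq] := fm_surj Ha2; subst a2.
    by exists a1 => //; rewrite inE -A3_eq.
  rewrite inE => H; have /andP [_ Ha1] := A3_keep H; by rewrite A3_eq.
rewrite card_in_imset // => x y; rewrite !inE => Hx Hy.
apply: fm_inj; [by case/andP: (A3_keep Hx)|by case/andP: (A3_keep Hy)].
Qed.

Lemma elem3_eq a : elem3 E2 lf2 (fm a) = elem3 E1 lf1 a.
Proof.
rewrite /elem3 keep3_eq; case: (boolP (keep3 E1 lf1 a)) => //= Ha.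
by rewrite card_A3_in // card_A3_out.
Qed.

Lemma A3e_eq a b : keep3 E1 lf1 a -> keep3 E1 lf1 b ->
  A3e E2 lf2 (fm a) (fm b) = A3e E1 lf1 a b.
Proof. by move=> Ha Hb; rewrite /A3e A3_eq // elem3_eq. Qed.

Lemma connect_fwd a c : keep3 E1 lf1 a -> connect (A3e E1 lf1) a c ->
  keep3 E1 lf1 c /\ connect (A3e E2 lf2) (fm a) (fm c).
Proof.
move=> Ha /connectP [p Hp ->]; elim: p a Ha Hp => /= [|y p IH] a Ha.
  by move=> _; split=> //; apply: connect0.
case/andP => Hay Hp.
have Hy : keep3 E1 lf1 y by case/andP: Hay => /A3_keep /andP [].
have [Hc Hcon] := IH _ Hy Hp; split=> //.
apply: connect_trans Hcon; apply: connect1; by rewrite A3e_eq.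
Qed.

Lemma connect_bwd a c2 : keep3 E1 lf1 a -> connect (A3e E2 lf2) (fm a) c2 ->
  exists c, [/\ keep3 E1 lf1 c, fm c = c2 & connect (A3e E1 lf1) a c].
Proof.
move=> Ha /connectP [p Hp ->]; elim: p a Ha Hp => /= [|y p IH] a Ha.
  by move=> _; exists a; split=> //; apply: connect0.
case/andP => Hay Hp.
have Hy : keep3 E2 lf2 y by case/andP: Hay => /A3_keep /andP [].
have [y1 Hy1 Heq] := fm_surj Hy; subst y.
have [c [Hc Hfc Hcon]] := IH _ Hy1 Hp; exists c; split=> //.
apply: connect_trans Hcon; apply: connect1; by rewrite -A3e_eq.
Qed.

Lemma labR_eq a : labR lf2 (fm a) = labR lf1 a.
Proof. by case: a => [v|r] //=; rewrite (sim_labN HN1 HN2 (Hg v)). Qed.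

Lemma iso_main : indistinguishable E1 lf1 E2 lf2.
Proof.
rewrite /indistinguishable /ldag_iso.
case: (boolP (has_conv E1 lf1)) => Hc.
- have Hc2 : has_conv E2 lf2 by rewrite -(has_conv_eq HN1 HN2 HU).
  have HkR : forall a, keepR E2 lf2 (fm a) = keepR E1 lf1 a.
    by move=> a; rewrite /keepR Hc Hc2 keep3_eq elem3_eq.
  exists fm; split.
  + by move=> x Hx; rewrite /in_mem /= HkR.
  + move=> y Hy; have : keepR E2 lf2 y := Hy.
    rewrite /keepR Hc2 => /andP [Hy3 Hey].
    have [x Hx Heq] := fm_surj Hy3; exists x => //.
    by rewrite Hc -keep3_eq -elem3_eq Heq Hy3 Hey.
  + move=> x y Hx Hy; have : keepR E1 lf1 x := Hx; have : keepR E1 lf1 y := Hy.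
    rewrite /keepR Hc => /andP [Hy3 _] /andP [Hx3 _].
    exact: fm_inj.
  + move=> x y Hx Hy; have Hx' : keepR E1 lf1 x := Hx; have Hy' : keepR E1 lf1 y := Hy.
    rewrite /AR Hc Hc2 !HkR Hx' Hy' /=.
    have Hkx : keep3 E1 lf1 x by move: Hx'; rewrite /keepR Hc => /andP [].
    have Hky : keep3 E1 lf1 y by move: Hy'; rewrite /keepR Hc => /andP [].
    apply/existsP/existsP => [[c2 /andP [Hcon Hc2y]]|[c /andP [Hcon Hcy]]].
      have [c [Hkc Hfc Hcon1]] := connect_bwd Hkx Hcon; subst c2.
      by exists c; rewrite Hcon1 -(A3_eq Hkc Hky).
    have [Hkc Hcon2] := connect_fwd Hkx Hcon.
    by exists (fm c); rewrite Hcon2 (A3_eq Hkc Hky).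
  + by move=> x _; apply: labR_eq.
- have Hc2 : ~~ has_conv E2 lf2 by rewrite -(has_conv_eq HN1 HN2 HU).
  have Hall1 : forall v, uniqN E1 lf1 v.
    move=> v; apply: (nconv_uniq HN1); apply/negP => H; move/negP: Hc; apply.
    by rewrite has_convE; apply/existsP; exists v.
  have Hall2 : forall v, uniqN E2 lf2 v.
    move=> v; apply: (nconv_uniq HN2); apply/negP => H; move/negP: Hc2; apply.
    by rewrite has_convE; apply/existsP; exists v.
  have K1 : forall a, keepR E1 lf1 a = if a is inl _ then true else false.
    by move=> a; rewrite /keepR (negbTE Hc).
  have K2 : forall a, keepR E2 lf2 a = if a is inl _ then true else false.
    by move=> a; rewrite /keepR (negbTE Hc2).
  exists fm; split.
  + move=> x Hx; have : keepR E1 lf1 x := Hx.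
    by rewrite /in_mem /= K1 K2; case: (x) Hx.
  + move=> [y|y] Hy; have : keepR E2 lf2 _ := Hy; rewrite K2 // => _.
    have [x Hx _] := g_surj (Hall2 y); exists (inl x); last by rewrite /= Hx.
    by rewrite /in_mem /= K1.
  + move=> [x|x] [y|y] Hx Hy; have : keepR E1 lf1 _ := Hx; have : keepR E1 lf1 _ := Hy;
    rewrite !K1 // => _ _ [H].
    by rewrite (g_inj (Hall1 y) H).
  + move=> [x|x] [y|y] Hx Hy; have : keepR E1 lf1 _ := Hx; have : keepR E1 lf1 _ := Hy;
    rewrite !K1 // => _ _.
    by rewrite /AR (negbTE Hc) (negbTE Hc2) /= (E_eq HN1 HN2 HU (Hg x) (Hg y) (Hall1 y)).
  + by move=> x _; apply: labR_eq.
Qed.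
End Main.

Theorem theorem2_proof (S V1 V2 : finType) (E1 : rel V1) (lf1 : S -> V1)
    (E2 : rel V2) (lf2 : S -> V2) :
  is_network E1 lf1 -> is_network E2 lf2 ->
  Ups_eq E1 lf1 E2 lf2 ->
  indistinguishable E1 lf1 E2 lf2.
Proof.
move=> HN1 HN2 HU.
have [g Hg] : exists g : V1 -> V2, forall v, sim E1 lf1 E2 lf2 v (g v).
  by apply: fin_all_exists => v; apply: partner HU v.
exact: (iso_main HN1 HN2 HU Hg).
Qed.


Unset Implicit Arguments.
Theorem theorem2 (S V1 V2 : finType) (E1 : rel V1) (lf1 : S -> V1)
    (E2 : rel V2) (lf2 : S -> V2) :
  is_network E1 lf1 -> is_network E2 lf2 ->
  Ups_eq E1 lf1 E2 lf2 ->
  indistinguishable E1 lf1 E2 lf2.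
Proof. exact: theorem2_proof. Qed.
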